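(* Let $\mathcal{Q}$ be a recourse function with a disaggregation $\{\mathcal{Q}(R,v)\}$ such that there are vectors $w\in\mathbb{Q}^{V_+}_{\ge0}$ and $b\in\mathbb{Z}^{V_+}_{\ge0}$ with the property that for every route $R$ there exists $\bar y_R\in\Pi(R)\cap[\mathbf 0,b]^N$ satisfying $\mathcal{Q}(R,v)\ge\sum_{\xi\in[N]}p_\xi w_v(\bar y_R)^\xi_v$ for all $v\in V_+(R)$. Define $$\mathcal{F}(\mathcal{X},\mathcal{Q})=\Big\{(x,\theta)\in(\mathcal{X}\cap\mathbb{Z}^E)\times\mathbb{R}^{V_+}_{\ge0}:\ \theta_v\ge\sum_{R\in\mathcal{R}(x)}\mathcal{Q}(R,v)\ \forall v\in V_+\Big\}$$ and let $\mathcal{M}$ be the set of triples $(x,\theta,y)$ with $x\in\mathcal{X}\cap\mathbb{Z}^E$, $y\in\Pi(x)\cap[\mathbf 0,b]^N$ and $\theta_v\ge\sum_{\xi\in[N]}p_\xi w_v y^\xi_v$ for all $v\in V_+$. Then $\mathcal{F}(\mathcal{X},\mathcal{Q})\subseteq\{(x,\theta):\exists y \text{ with }(x,\theta,y)\in\mathcal{M}\}$.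
   Context: $G=(V,E)$ is a complete undirected graph with $V=\{0\}\cup V_+$ ($0$ the depot, $V_+$ the customers); $D=(V,A)$ replaces each edge by two opposite arcs. $C\in\mathbb{Q}_{>0}$ is the capacity. Scenarios $\xi\in[N]$ have demand vectors $d^\xi\in\mathbb{Q}^{V_+}_{\ge0}$ and probabilities $p_\xi\ge0$, $\sum_\xi p_\xi=1$; assume $d^\xi(v)\le C$ for all $\xi,v$. $f(S)=\sum_{i\in S}f(i)$; $\bar d=\sum_\xi p_\xi d^\xi$. $\delta(S)$: edges with exactly one endpoint in $S$; $E(S)$: edges with both endpoints in $S$. $\mathcal{X}$ is one of $\mathcal{X}_{\mathrm{sub}}=\{x\in[0,2]^E: x(\delta(v))=2\ \forall v\in V_+,\ x(E(S))\le|S|-1\ \forall\emptyset\ne S\subseteq V_+\}$ or $\mathcal{X}_{\mathrm{cvrp}}=\mathcal{X}_{\mathrm{sub}}\cap\{x: x(\delta(0))=2k,\ x(E(S))\le |S|-\lceil\bar d(S)/C\rceil\ \forall\emptyset\ne S\subseteq V_+\}$ for a given positive integer $k$. A route $R=(v_1,\dots,v_\ell)$ is the cycle $0,v_1,\dots,v_\ell,0$ through distinct customers, $V_+(R)=\{v_1,\dots,v_\ell\}$, $v_0=v_{\ell+1}=0$. Each $x\in\mathcal{X}\cap\mathbb{Z}^E$ encodes a collection of routes $\mathcal{R}(x)$ whose customer sets partition $V_+$. A recourse function $\mathcal{Q}$ maps each route to a nonnegative rational; a disaggregation consists of values $\mathcal{Q}(R,v)$, $v\in V_+$, with $\mathcal{Q}(R)=\sum_{v\in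 V_+(R)}\mathcal{Q}(R,v)$ and $\mathcal{Q}(R,v)=0$ for $v\notin V_+(R)$. Vectors $y\in\mathbb{R}^{[N]\times V_+}$ have entries $y^\xi_v$. For a route $R=(v_1,\dots,v_\ell)$ and $\xi$, $\mathcal{Y}^\xi(R)$ is the set of $y^\xi\in\mathbb{Z}^{V_+}_{\ge0}$ for which there exist $f\in\mathbb{R}^A_{\ge0}$, $g\in\mathbb{R}^{V_+}_{\ge0}$ with $f_{(v_{i-1},v_i)}+d^\xi(v_i)=f_{(v_i,v_{i+1})}+g_{v_i}$ ($i\in[\ell]$), $f_{(v_{i-1},v_i)}\le C$ ($i\in[\ell+1]$), $g_{v_i}\le Cy^\xi_{v_i}$ ($i\in[\ell]$). $\Pi(R)=\mathcal{Y}^1(R)\times\cdots\times\mathcal{Y}^N(R)$; $\Pi(x)=\bigcap_{R\in\mathcal{R}(x)}\Pi(R)$. $[\mathbf 0,b]^N=\{y:0\le y^\xi_v\le b_v\ \forall\xi,v\}$. *)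

(* Defs.v *)
From HB Require Import structures.
From mathcomp Require Import all_boot all_order all_algebra.
Set Implicit Arguments. Unset Strict Implicit. Unset Printing Implicit Defensive.
Import Order.TTheory GRing.Theory Num.Theory.
Local Open Scope ring_scope.

(* Vertices: [option V]; [None] is the depot 0, [Some v] the customer v \in V_+. *)
Definition vert (V : finType) := option V.

Definition edge (V : finType) := {e : {set option V} | #|e| == 2}.

Definition in_delta (V : finType) (S : {set option V}) (e : edge V) : bool :=
  #|val e :&: S| == 1.
Definition in_ES (V : finType) (S : {set option V}) (e : edge V) : bool :=
  val e \subset S.

Definition custs (V : finType) (S : {set V}) : {set option V} := Some @: S.

Definition in_Xsub (R : archiRealFieldType) (V : finType) (x : edge V -> R) : Prop :=
  [/\ forall e, 0 <= x e <= 2,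
      forall v : V, \sum_(e | in_delta [set Some v] e) x e = 2
    & forall S : {set V}, S != set0 ->
        \sum_(e | in_ES (custs S) e) x e <= (#|S|%:R - 1)].

Definition dbar (R : archiRealFieldType) (V : finType) (N : nat)
  (p : 'I_N -> R) (d : 'I_N -> V -> R) (S : {set V}) : R :=
  \sum_(v in S) \sum_(xi < N) p xi * d xi v.

Definition in_Xcvrp (R : archiRealFieldType) (V : finType) (N : nat)
  (C : R) (p : 'I_N -> R) (d : 'I_N -> V -> R) (k : nat) (x : edge V -> R) : Prop :=
  [/\ in_Xsub x,
      \sum_(e | in_delta [set None] e) x e = (2 * k)%:R
    & forall S : {set V}, S != set0 ->
        \sum_(e | in_ES (custs S) e) x e
          <= #|S|%:R - (Num.ceil (dbar p d S / C))%:~R].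

Definition in_X (R : archiRealFieldType) (V : finType) (N : nat)
  (C : R) (p : 'I_N -> R) (d : 'I_N -> V -> R) (kind : option nat)
  (x : edge V -> R) : Prop :=
  match kind with
  | None => in_Xsub x
  | Some k => in_Xcvrp C p d k x
  end.

(* A route R = (v_1,...,v_l): a nonempty duplicate-free sequence of customers,
   standing for the cycle 0, v_1, ..., v_l, 0. *)
Definition is_route (V : finType) (r : seq V) : Prop := r != [::] /\ uniq r.

Definition walk (V : finType) (r : seq V) : seq (option V) :=
  None :: rcons (map Some r) None.

(* number of times the cycle of route r traverses edge e (2 for {0,v_1} if l = 1) *)
Definition route_x (V : finType) (r : seq V) (e : edge V) : nat :=
  count (fun uv : option V * option V => [set uv.1; uv.2] == val e)
        (zip (walk r) (behead (walk r))).

(* x (integral) encodes the collection of routes rs = R(x): x is the sum of the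
   edge-incidence vectors of the route cycles, and the customer sets of the routes
   partition V_+. *)
Definition encodes (R : archiRealFieldType) (V : finType) (x : edge V -> R)
  (rs : seq (seq V)) : Prop :=
  [/\ forall r, r \in rs -> is_route r,
      forall v : V, count (fun r => v \in r) rs = 1%N
    & forall e, x e = (\sum_(r <- rs) route_x r e)%:R].

Definition in_Y (R : archiRealFieldType) (V : finType) (C : R) (dxi : V -> R)
  (r : seq V) (yxi : V -> R) : Prop :=
  (forall v, yxi v \is a Num.nat) /\
  exists (f : option V -> option V -> R) (g : V -> R),
    [/\ forall a b, 0 <= f a b,
        forall v, 0 <= g v,
        (* flow conservation and g <= C y at v_i, i in [l] *)
        forall i, (i < size r)%N -> forall u,
          nth None (walk r) i.+1 = Some u ->
          f (nth None (walk r) i) (Some u) + dxi u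
            = f (Some u) (nth None (walk r) i.+2) + g u
          /\ g u <= C * yxi u
      & (* capacity on arcs (v_{i-1}, v_i), i in [l+1] *)
        forall i, (i <= size r)%N ->
          f (nth None (walk r) i) (nth None (walk r) i.+1) <= C].

Definition in_PiR (R : archiRealFieldType) (V : finType) (N : nat) (C : R)
  (d : 'I_N -> V -> R) (r : seq V) (y : 'I_N -> V -> R) : Prop :=
  forall xi : 'I_N, in_Y C (d xi) r (y xi).

Definition in_Pi (R : archiRealFieldType) (V : finType) (N : nat) (C : R)
  (d : 'I_N -> V -> R) (rs : seq (seq V)) (y : 'I_N -> V -> R) : Prop :=
  forall r, r \in rs -> in_PiR C d r y.

Definition in_box (R : archiRealFieldType) (V : finType) (N : nat) (b : V -> nat)
  (y : 'I_N -> V -> R) : Prop :=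
  forall xi v, 0 <= y xi v <= (b v)%:R.

(* Main.v *)
Require Import Defs.
From HB Require Import structures.
From mathcomp Require Import all_boot all_order all_algebra.
From Stdlib Require Import Classical ClassicalEpsilon.
Import Order.TTheory GRing.Theory Num.Theory.
Local Open Scope ring_scope.

Theorem proposition1
  (R : archiRealFieldType) (V : finType) (N : nat)
  (C : R) (p : 'I_N -> R) (d : 'I_N -> V -> R) (kind : option nat)
  (Q : seq V -> R) (Qd : seq V -> V -> R) (w : V -> R) (b : V -> nat) :
  0 < C ->
  (forall xi, 0 <= p xi) -> \sum_(xi < N) p xi = 1 ->
  (forall xi v, 0 <= d xi v <= C) ->
  (forall k, kind = Some k -> (0 < k)%N) ->
  (* Q is a recourse function with disaggregation Qd *)
  (forall r, is_route r -> 0 <= Q r) ->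
  (forall r, is_route r -> Q r = \sum_(v <- r) Qd r v) ->
  (forall r v, is_route r -> v \notin r -> Qd r v = 0) ->
  (* w >= 0, and the hypothesis on w, b *)
  (forall v, 0 <= w v) ->
  (forall r, is_route r ->
     exists ybar : 'I_N -> V -> R,
       [/\ in_PiR C d r ybar, in_box b ybar
         & forall v, v \in r -> \sum_(xi < N) p xi * w v * ybar xi v <= Qd r v]) ->
  (* conclusion: F(X,Q) is contained in the projection of M *)
  forall (x : edge V -> R) (rs : seq (seq V)) (theta : V -> R),
    in_X C p d kind x -> (forall e, x e \is a Num.int) -> encodes x rs ->
    (forall v, 0 <= theta v) ->
    (forall v, \sum_(r <- rs) Qd r v <= theta v) ->
    exists y : 'I_N -> V -> R,
      [/\ in_Pi C d rs y, in_box b y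
        & forall v, \sum_(xi < N) p xi * w v * y xi v <= theta v].
Proof.
move=> C0 p0 p1 dC k0 Q0 QE Qd0 w0 Hy x rs theta _ _ [Hrt Hcnt _] th0 thQ.
have Hex : forall r : seq V, exists ybar : 'I_N -> V -> R, is_route r ->
   [/\ in_PiR C d r ybar, in_box b ybar
     & forall v, v \in r -> \sum_(xi < N) p xi * w v * ybar xi v <= Qd r v].
  move=> r; case: (classic (is_route r)) => [/Hy [yb Hyb]|nr].
    by exists yb.
  by exists (fun _ _ => 0).
pose f r := proj1_sig (constructive_indefinite_description _ (Hex r)).
have Hf r : is_route r -> [/\ in_PiR C d r (f r), in_box b (f r)
     & forall v, v \in r -> \sum_(xi < N) p xi * w v * f r xi v <= Qd r v].
  by rewrite /f; case: constructive_indefinite_description.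
pose rv v := nth [::] rs (find (fun r => v \in r) rs).
have has_v v : has (fun r => v \in r) rs.
  by rewrite has_count Hcnt.
have rv_in v : rv v \in rs by rewrite mem_nth // -has_find.
have v_rv v : v \in rv v by apply: (nth_find [::] (has_v v)).
have rem0 v r : r \in rs -> v \in r -> forall r', r' \in rem r rs -> v \notin r'.
  move=> rin vin.
  have := Hcnt v; rewrite ((permP (perm_to_rem rin)) _) /= vin.
  move=> /eqP; rewrite add1n eqSS => /eqP H0 r' Hr'.
  have : ~~ has (fun r0 => v \in r0) (rem r rs) by rewrite has_count H0.
  by move/hasPn; apply.
have rvE v r : r \in rs -> v \in r -> rv v = r.
  move=> rin vin; apply/eqP; apply/negPn/negP => ne.
  have := rem0 v r rin vin (rv v) (rem_mem ne (rv_in v)).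
  by rewrite v_rv.
pose y xi v := f (rv v) xi v.
exists y; split.
- move=> r rin xi.
  have [Hp _ _] := Hf r (Hrt r rin).
  have [_ [f0 [g [Hf0 Hg Hfl Hcap]]]] := Hp xi.
  split.
    by move=> v; have [Hp' _ _] := Hf (rv v) (Hrt _ (rv_in v)); have [Hn _] := Hp' xi; apply: Hn.
  exists f0, g; split => // i Hi u Hu.
  have uin : u \in r.
    move: Hu; rewrite /walk /= nth_rcons size_map Hi (nth_map u) //.
    by case=> <-; apply: mem_nth.
  by rewrite /y (rvE u r rin uin); apply: Hfl.
- move=> xi v; rewrite /y.
  by have [_ Hb _] := Hf (rv v) (Hrt _ (rv_in v)); apply: Hb.
- move=> v; apply: (le_trans _ (thQ v)).
  rewrite (perm_big _ (perm_to_rem (rv_in v))) big_cons (@big1_seq _ _ _ _ (rem (rv v) rs)) ?addr0.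
    have [_ _ Hq] := Hf (rv v) (Hrt _ (rv_in v)).
    by rewrite /= addr0; exact: (Hq v (v_rv v)).
  move=> r /andP[_ Hr]; apply: Qd0; first by apply: Hrt; apply: mem_rem Hr.
  by apply: rem0 Hr; [apply: rv_in | apply: v_rv].
Qed.
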